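(* Let $R>0$, $x_0\in\mathbb{R}^d$ and $u\in\mathcal{P}^F_R(x_0)$. Then $$\sup_{\partial B_r(x_0)}u\ge C r^\beta\qquad\text{for all }0<r<R,$$ where $\beta=\frac{2}{2-\gamma}$ and $C>0$ is a constant depending only on $d$, $\Lambda$ and $\gamma$.
   Context: Fix $d\ge1$, $\Lambda\ge1$, $\gamma\in(1,2)$. $\mathcal{S}_d$ is the space of real symmetric $d\times d$ matrices. Standing assumptions on $F:\mathcal{S}_d\to\mathbb{R}$: (i) uniform ellipticity: $\frac1\Lambda\|P\|\le F(M+P)-F(M)\le\Lambda\|P\|$ for all $M,P\in\mathcal{S}_d$, $P\ge0$; (ii) $F$ is convex, $F(0)=0$, and the trace map is a sub-differential of $F$ at $0$ (i.e. $\mathrm{trace}(M)\le F(M)$ for all $M$); (iii) either $F$ is (Gâteaux) differentiable at $0$, or $F(\lambda M)=\lambda F(M)$ for all $\lambda>0$, $M\in\mathcal{S}_d$. $\mathcal{P}^F_R(x_0)$ is the class of continuous viscosity solutions $u$ of $F(D^2u)=u^{\gamma-1}$, $u\ge0$ in $B_R(x_0)$, such that $x_0\in\partial\{u>0\}$. *)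

(* Defs.v *)
From HB Require Import structures.
From mathcomp Require Import all_boot all_order all_algebra.
From mathcomp Require Import all_classical all_reals all_analysis.
Set Implicit Arguments. Unset Strict Implicit. Unset Printing Implicit Defensive.
Import Order.TTheory GRing.Theory Num.Theory.
Import numFieldNormedType.Exports.
Local Open Scope classical_set_scope.
Local Open Scope ring_scope.

Section Defs.
Variables (R : realType) (d : nat).

(* Euclidean norm on R^d (the library norm on 'rV is the sup norm). *)
Definition enorm (v : 'rV[R]_d) : R := Num.sqrt (\sum_(i < d) v ord0 i ^+ 2).

Definition eball (x : 'rV[R]_d) (r : R) : set 'rV[R]_d :=
  [set y | enorm (y - x) < r].
Definition esphere (x : 'rV[R]_d) (r : R) : set 'rV[R]_d :=
  [set y | enorm (y - x) = r].

Definition symmetric (M : 'M[R]_d) : Prop := M^T = M.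
Definition psd (P : 'M[R]_d) : Prop :=
  symmetric P /\ forall v : 'rV[R]_d, 0 <= (v *m P *m v^T) ord0 ord0.

Definition opnorm (P : 'M[R]_d) : R :=
  sup [set enorm (v *m P^T) | v in [set v : 'rV[R]_d | enorm v = 1]].

(* Standing assumptions (i)-(iii) on F : S_d -> R;
   F is given on all matrices but only its values on S_d matter. *)
Definition unif_elliptic (Lam : R) (F : 'M[R]_d -> R) : Prop :=
  forall M P : 'M[R]_d, symmetric M -> psd P ->
    Lam^-1 * opnorm P <= F (M + P) - F M /\ F (M + P) - F M <= Lam * opnorm P.

Definition convex_on_Sd (F : 'M[R]_d -> R) : Prop :=
  forall (M N : 'M[R]_d) (t : R), symmetric M -> symmetric N -> 0 <= t <= 1 ->
    F (t *: M + (1 - t) *: N) <= t * F M + (1 - t) * F N.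

Definition gateaux_diff_at0 (F : 'M[R]_d -> R) : Prop :=
  exists L : 'M[R]_d -> R,
    (forall (a b : R) (M N : 'M[R]_d), symmetric M -> symmetric N ->
        L (a *: M + b *: N) = a * L M + b * L N) /\
    (forall N : 'M[R]_d, symmetric N ->
        (fun t : R => (F (t *: N) - F 0) / t) @ 0^' --> L N).

Definition pos_homogeneous (F : 'M[R]_d -> R) : Prop :=
  forall (lam : R) (M : 'M[R]_d), 0 < lam -> symmetric M -> F (lam *: M) = lam * F M.

Definition standing_assumptions (Lam : R) (F : 'M[R]_d -> R) : Prop :=
  [/\ unif_elliptic Lam F,
      convex_on_Sd F, F 0 = 0,
      (forall M : 'M[R]_d, symmetric M -> \tr M <= F M) &
      (gateaux_diff_at0 F \/ pos_homogeneous F)].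

Definition evec (i : 'I_d) : 'rV[R]_d := delta_mx ord0 i.

Definition partial (i : 'I_d) (f : 'rV[R]_d -> R) : 'rV[R]_d -> R :=
  fun x => derive f x (evec i).

Definition C2_on (U : set 'rV[R]_d) (f : 'rV[R]_d -> R) : Prop :=
  forall y, U y -> forall i j : 'I_d,
    [/\ derivable f y (evec i),
        derivable (partial i f) y (evec j) &
        {for y, continuous (partial j (partial i f))}].

Definition hessian (f : 'rV[R]_d -> R) (x : 'rV[R]_d) : 'M[R]_d :=
  \matrix_(i, j) partial j (partial i f) x.

Definition visc_subsol (F : 'M[R]_d -> R) (g : R) (U : set 'rV[R]_d)
    (u : 'rV[R]_d -> R) : Prop :=
  forall (x : 'rV[R]_d) (phi : 'rV[R]_d -> R) (del : R), U x -> 0 < del ->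
    C2_on (eball x del) phi ->
    (forall y, eball x del y -> U y -> u y - phi y <= u x - phi x) ->
    F (hessian phi x) >= u x `^ (g - 1).

Definition visc_supersol (F : 'M[R]_d -> R) (g : R) (U : set 'rV[R]_d)
    (u : 'rV[R]_d -> R) : Prop :=
  forall (x : 'rV[R]_d) (phi : 'rV[R]_d -> R) (del : R), U x -> 0 < del ->
    C2_on (eball x del) phi ->
    (forall y, eball x del y -> U y -> u y - phi y >= u x - phi x) ->
    F (hessian phi x) <= u x `^ (g - 1).

Definition classP (F : 'M[R]_d -> R) (g R0 : R) (x0 : 'rV[R]_d)
    (u : 'rV[R]_d -> R) : Prop :=
  let U := eball x0 R0 in
  [/\ {in U, continuous u},
      (forall x, U x -> 0 <= u x),
      visc_subsol F g U u, visc_supersol F g U u &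
      (closure [set y | 0 < u y] x0 /\ ~ interior [set y | 0 < u y] x0)].

End Defs.

(* Main.v *)
Require Import Defs.
From HB Require Import structures.
From mathcomp Require Import all_boot all_order all_algebra.
From mathcomp Require Import all_classical all_reals all_analysis.
From mathcomp Require Import ring lra.
Import Order.TTheory GRing.Theory Num.Theory.
Import numFieldNormedType.Exports.
Local Open Scope classical_set_scope.
Local Open Scope ring_scope.

Set Implicit Arguments. Unset Strict Implicit.
Section S.
Variable R : realType.

Definition G (c a rho : R) (n : nat) : R -> R := fun s => c * ((s - a) / rho) ^+ n.

Lemma lin_is_derive (a rho t : R) :
  is_derive t (1:R) (fun s : R => (s - a) / rho) rho^-1.
Proof.
have -> : (fun s : R => (s - a) / rho) = rho^-1 \*: (id - cst a).
  by apply/funext => s /=; rewrite mulrC.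
have H1 : is_derive t (1:R) (id - cst a) (1 - 0) by apply: is_deriveB.
have := @is_deriveZ R R R _ rho^-1 t 1 _ H1.
by rewrite subr0 /GRing.scale /= mulr1.
Qed.

Lemma G_is_derive c a rho n t :
  is_derive t (1:R) (G c a rho n) (G (c * n%:R / rho) a rho n.-1 t).
Proof.
have -> : G c a rho n = c \*: (fun s : R => (s - a) / rho) ^+ n.
  by apply/funext => s /=; rewrite /G exprfctE.
have := @is_deriveZ R R R _ c t 1 _ (@is_deriveX R R _ n t 1 _ (lin_is_derive a rho t)).
rewrite /G /GRing.scale /= => H; apply: is_derive_eq H _.
idtac.
by ring.
Qed.

Lemma G_derive1 c a rho n : derive1 (G c a rho n) = G (c * n%:R / rho) a rho n.-1.
Proof. by apply/funext => t; rewrite derive1E; case: (G_is_derive c a rho n t). Qed.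

Lemma G_derivable c a rho n t : derivable (G c a rho n) t 1.
Proof. by case: (G_is_derive c a rho n t). Qed.

Lemma G_continuous c a rho n : continuous (G c a rho n).
Proof.
move=> t; apply: differentiable_continuous.
exact/derivable1_diffP/G_derivable.
Qed.

Variable d : nat.

Definition sep (g : 'I_d -> R -> R) (x : 'rV[R]_d) : R := \sum_j g j (x ord0 j).

Lemma sep_shift g i (x : 'rV[R]_d) (h : R) :
  sep g (h *: evec R i + x) - sep g x = g i (h + x ord0 i) - g i (x ord0 i).
Proof.
rewrite /sep -sumrB (bigD1 i) //= big1 ?addr0.
  by rewrite !mxE !eqxx /= mulr1.
move=> j ji; rewrite !mxE (negbTE ji) andbF /= mulr0 add0r subrr //.
Qed.

Lemma sep_dq g i (x : 'rV[R]_d) :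
  (fun h : R => h^-1 *: ((sep g \o shift x) (h *: evec R i) - sep g x)) =
  (fun h : R => h^-1 *: ((g i \o shift (x ord0 i)) (h *: (1:R)) - g i (x ord0 i))).
Proof.
apply/funext => h /=; rewrite sep_shift; congr (_ *: (_ - _)).
by rewrite /GRing.scale /= mulr1.
Qed.

Lemma sep_derivable (g : 'I_d -> R -> R) i (x : 'rV[R]_d) : derivable (g i) (x ord0 i) 1 -> derivable (sep g) x (evec R i).
Proof. by rewrite /derivable sep_dq. Qed.

Lemma sep_partial (g : 'I_d -> R -> R) i : partial i (sep g) = fun x => derive1 (g i) (x ord0 i).
Proof. by apply/funext => x; rewrite /partial /derive sep_dq derive1E /derive. Qed.

Lemma coord_sep (f : R -> R) i :
  (fun x : 'rV[R]_d => f (x ord0 i)) = sep (fun j => if j == i then f else cst 0).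
Proof.
apply/funext => x; rewrite /sep (bigD1 i) //= eqxx big1 ?addr0 //.
by move=> j /negbTE ->.
Qed.

Lemma sep_partial2 (g : 'I_d -> R -> R) i j :
  partial j (partial i (sep g)) =
  fun x => derive1 (if j == i then derive1 (g i) else cst 0) (x ord0 j).
Proof. by rewrite sep_partial coord_sep sep_partial. Qed.

Lemma sep_hessian (g : 'I_d -> R -> R) x :
  hessian (sep g) x = diag_mx (\row_j derive1 (derive1 (g j)) (x ord0 j)).
Proof.
apply/matrixP => i j; rewrite !mxE sep_partial2.
case: eqP => [->|/eqP ji]; first by rewrite eqxx mulr1n.
by rewrite eq_sym (negbTE ji) mulr0n derive1_cst.
Qed.

Lemma sep_C2 (g : 'I_d -> R -> R) U :
  (forall j t, derivable (g j) t 1) ->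
  (forall j t, derivable (derive1 (g j)) t 1) ->
  (forall j, continuous (derive1 (derive1 (g j)))) ->
  C2_on U (sep g).
Proof.
move=> h1 h2 h3 y _ i j; split.
- exact: sep_derivable.
- rewrite sep_partial coord_sep; apply: sep_derivable.
  by case: (j == i); [exact: h2 | exact: derivable_cst].
- rewrite sep_partial2.
  apply: (@continuous_comp _ _ _ (fun x : 'rV[R]_d => x ord0 j)).
    exact: coord_continuous.
  case: (j == i); first exact: h3.
  rewrite (_ : derive1 (cst (0:R)) = cst 0); first exact: cst_continuous.
  by apply/funext => t; rewrite derive1_cst.
Qed.

Lemma sep_continuous (g : 'I_d -> R -> R) :
  (forall j, continuous (g j)) -> continuous (sep g).
Proof.
move=> hg; rewrite /sep; elim: (index_enum _) => [|j s IH].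
  under [X in continuous X]funext do rewrite big_nil.
  exact: cst_continuous.
under [X in continuous X]funext do rewrite big_cons.
move=> x; apply: continuousD; last exact: IH.
apply: (@continuous_comp _ _ _ (fun x : 'rV[R]_d => x ord0 j)).
  exact: coord_continuous.
exact: hg.
Qed.

Lemma sumsq_ge0 (v : 'rV[R]_d) : 0 <= \sum_j v ord0 j ^+ 2.
Proof. by apply: sumr_ge0 => j _; rewrite sqr_ge0. Qed.

Lemma enorm_ge0 (v : 'rV[R]_d) : 0 <= enorm v.
Proof. exact: sqrtr_ge0. Qed.

Lemma enorm_sq (v : 'rV[R]_d) : enorm v ^+ 2 = \sum_j v ord0 j ^+ 2.
Proof. by rewrite /enorm sqr_sqrtr // sumsq_ge0. Qed.

Lemma coord_le_enorm (v : 'rV[R]_d) i : `|v ord0 i| <= enorm v.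
Proof.
rewrite -sqrtr_sqr /enorm ler_wsqrtr // (bigD1 i) //= lerDl.
by apply: sumr_ge0 => j _; rewrite sqr_ge0.
Qed.

Lemma enorm_evec (i : 'I_d) : enorm (evec R i) = 1.
Proof.
rewrite /enorm (bigD1 i) //= big1 ?addr0.
  by rewrite !mxE !eqxx /= expr1n sqrtr1.
by move=> j ji; rewrite !mxE (negbTE ji) andbF /= expr0n.
Qed.

Lemma psd_diag (w : 'rV[R]_d) : (forall j, 0 <= w ord0 j) -> psd (diag_mx w).
Proof.
move=> hw; split; first by rewrite /symmetric; apply: tr_diag_mx.
move=> v; rewrite mul_mx_diag !mxE; apply: sumr_ge0 => j _.
rewrite !mxE mulrAC; apply: mulr_ge0 => //; rewrite -expr2; exact: sqr_ge0.
Qed.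

Lemma opnorm_diag (w : 'rV[R]_d) (m : R) (i0 : 'I_d) :
  (forall j, 0 <= w ord0 j <= m) -> opnorm (diag_mx w) <= m.
Proof.
move=> hw; rewrite /opnorm; apply: ge_sup.
  by exists (enorm (evec R i0 *m (diag_mx w)^T)); exists (evec R i0) => //; exact: enorm_evec.
move=> _ [v /= v1 <-].
have m0 : 0 <= m by case/andP: (hw i0) => /le_trans; apply.
rewrite tr_diag_mx mul_mx_diag.
have -> : m = Num.sqrt (m ^+ 2 * \sum_j v ord0 j ^+ 2).
  by rewrite sqrtrM ?sqr_ge0 // sqrtr_sqr ger0_norm // -/(enorm v) v1 mulr1.
rewrite ler_wsqrtr // mulr_sumr; apply: ler_sum => j _.
rewrite !mxE exprMn mulrC ler_wpM2r ?sqr_ge0 //.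
case/andP: (hw j) => h1 h2; rewrite ler_sqr //; exact: nnegrE.
Qed.

Lemma mx_norm_coord (M : 'rV[R]_d) i : `|M ord0 i| <= `|M|.
Proof.
rewrite [leRHS]/Num.Def.normr /= mx_normrE.
exact: (le_bigmax _ (fun ij : 'I_1 * 'I_d => `|M ij.1 ij.2|) (ord0, i)).
Qed.

Lemma mx_norm_le_enorm (M : 'rV[R]_d) : `|M| <= enorm M.
Proof.
rewrite [leLHS]/Num.Def.normr /= mx_normrE; apply/bigmax_leP; split.
  exact: enorm_ge0.
by move=> [i j] _ /=; rewrite (ord1 i); exact: coord_le_enorm.
Qed.

Lemma enorm_le_coord (v : 'rV[R]_d) (e : R) : 0 <= e ->
  (forall i, `|v ord0 i| <= e) -> enorm v <= d%:R * e.
Proof.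
move=> e0 hv; rewrite /enorm -(ger0_norm (_ : 0 <= d%:R * e)); last first.
  by apply: mulr_ge0.
rewrite -sqrtr_sqr ler_wsqrtr //.
apply: (@le_trans _ _ (\sum_(j < d) e ^+ 2)).
  apply: ler_sum => j _; rewrite -[v ord0 j ^+ 2]ger0_norm ?sqr_ge0 // normrX.
  by rewrite ler_sqr ?nnegrE ?normr_ge0.
have hd : (d%:R : R) <= d%:R ^+ 2.
  case: d => [|n]; first by rewrite expr0n.
  by rewrite -natrX ler_nat expnS leq_pmulr // expn_gt0.
rewrite sumr_const card_ord -[e ^+ 2 *+ d]mulr_natr exprMn [_ * e ^+ 2]mulrC.
by apply: ler_wpM2l => //; exact: sqr_ge0.
Qed.

Lemma enorm0 : enorm (0 : 'rV[R]_d) = 0.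
Proof. by rewrite /enorm big1 ?sqrtr0 // => j _; rewrite mxE expr0n. Qed.

Lemma enorm_cont (x0 : 'rV[R]_d) : continuous (fun w : 'rV[R]_d => enorm (w - x0)).
Proof.
have -> : (fun w : 'rV[R]_d => enorm (w - x0)) =
   Num.sqrt \o sep (fun j t => (t - x0 ord0 j) ^+ 2).
  by apply/funext => w; rewrite /enorm /sep /=; congr Num.sqrt; apply: eq_bigr => j _; rewrite !mxE.
move=> w; apply: continuous_comp; last exact: sqrt_continuous.
apply: sep_continuous => j t.
apply: (@continuous_comp _ _ _ (fun t : R => t - x0 ord0 j) (fun t => t ^+ 2)).
  by apply: continuousB; [exact: cvg_id | exact: cvg_cst].
exact: exprn_continuous.
Qed.

End S.

Section Pow.
Variable R : realType.

Lemma A_pow {gam X : R} : 1 < gam < 2 -> 0 < X ->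
  (X `^ (2 - gam)^-1) `^ (gam - 1) = X `^ (2 - gam)^-1 * X^-1.
Proof.
move=> /andP[g1 g2] X0.
have A0 : 0 < X `^ (2 - gam)^-1 by apply: powR_gt0.
have -> : gam - 1 = 1 + (gam - 2) by ring.
rewrite powRD; last by apply/implyP => _; rewrite gt_eqF.
rewrite powRr1 ?ltW //; congr (_ * _).
rewrite -powRrM (_ : (2 - gam)^-1 * (gam - 2) = -1); first by rewrite powR_inv1 // ltW.
have h : 2 - gam != 0 by rewrite subr_eq0 gt_eqF.
have -> : gam - 2 = - (2 - gam) by ring.
by rewrite mulrN mulVf.
Qed.

Lemma q_pow (gam q : R) (m : nat) : 1 < gam < 2 -> 0 <= q <= 1 -> (0 < m)%N ->
  (m.+2)%:R * (gam - 1) <= m%:R -> q ^+ m <= (q ^+ m.+2) `^ (gam - 1).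
Proof.
move=> /andP[g1 g2] /andP[q0 q1] m0 hm.
have [->|qp] := eqVneq q 0; first by rewrite expr0n /=; case: m m0 hm => // *; exact: powR_ge0.
have qp' : 0 < q by rewrite lt_def qp q0.
rewrite -!powR_mulrn // -powRrM.
by apply: ger_powR => //; rewrite qp' q1.
Qed.

Lemma key_pow (gam L rho q : R) (m : nat) : 1 < gam < 2 -> 0 < L -> 0 < rho ->
  0 <= q <= 1 -> (0 < m)%N -> (m.+2)%:R * (gam - 1) <= m%:R ->
  L * ((rho ^+ 2 / L) `^ (2 - gam)^-1) / rho ^+ 2 * q ^+ m <=
  ((rho ^+ 2 / L) `^ (2 - gam)^-1 * q ^+ m.+2) `^ (gam - 1).
Proof.
move=> hg L0 r0 hq m0 hm.
have X0 : 0 < rho ^+ 2 / L by apply: divr_gt0 => //; apply: exprn_gt0.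
have q0 : 0 <= q by case/andP: hq.
have hA := A_pow hg X0.
set A := (rho ^+ 2 / L) `^ (2 - gam)^-1 in hA *.
rewrite powRM ?powR_ge0 ?exprn_ge0 // hA.
apply: ler_pM.
- by apply: mulr_ge0; [apply: mulr_ge0; [exact: ltW | exact: powR_ge0] | rewrite invr_ge0 exprn_ge0 // ltW].
- exact: exprn_ge0.
- by rewrite invf_div mulrCA mulrA.
- exact: q_pow.
Qed.

Lemma A_eq (gam L r : R) : 0 < L -> 0 < r ->
  ((2 * r) ^+ 2 / L) `^ (2 - gam)^-1 = (4 / L) `^ (2 - gam)^-1 * r `^ (2 / (2 - gam)).
Proof.
move=> L0 r0.
have -> : (2 * r) ^+ 2 / L = 4 / L * r ^+ 2 by rewrite exprMn mulrAC; congr (_ * _ * _); rewrite expr2 -natrM.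
rewrite powRM ?exprn_ge0 ?ltW //; last by apply: divr_gt0.
by rewrite -powR_mulrn ?ltW // -powRrM.
Qed.

Lemma exists_max (d : nat) (i0 : 'I_d) (F : 'I_d -> R) : exists i, forall j, F j <= F i.
Proof. by exists (Order.arg_max i0 xpredT F); case: (@Order.TotalTheory.arg_maxP _ _ _ i0 xpredT F) => // i _ h j; apply: h. Qed.

Lemma even_abs (x : R) (j : nat) : x ^+ j.*2 = `|x| ^+ j.*2.
Proof. by rewrite -normrX ger0_norm // exprn_even_ge0 // odd_double. Qed.

Lemma ring_aux (Lam A a b rho q : R) :
  Lam * (A * a / rho * b / rho * q) = Lam * (a * b) * A / rho ^+ 2 * q.
Proof. by rewrite expr2 invfM; ring. Qed.

End Pow.

Unset Implicit Arguments. Set Strict Implicit.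

Theorem corollary2p10 (R : realType) (d : nat) (Lam gamma : R) :
  (1 <= d)%N -> 1 <= Lam -> 1 < gamma < 2 ->
  exists C : R, 0 < C /\
    forall (F : 'M[R]_d -> R) (R0 : R) (x0 : 'rV[R]_d) (u : 'rV[R]_d -> R),
      standing_assumptions Lam F -> 0 < R0 ->
      classP F gamma R0 x0 u ->
      forall r : R, 0 < r < R0 ->
        sup (u @` esphere x0 r) >= C * r `^ (2 / (2 - gamma)).
Proof.
move=> hd hL hg.
have /andP[g1 g2] := hg.
set b := 2 / (2 - gamma).
set j := (Num.truncn ((2 - gamma)^-1)).+1.
have hj : (2 - gamma)^-1 < j%:R by exact: truncnS_gt.
set m := j.*2.
set n := m.+2.
have m0 : (0 < m)%N by rewrite /m double_gt0.
have hn : n%:R = 2 * j%:R + 2 :> R by rewrite /n /m -addn2 natrD -muln2 natrM mulrC.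
have hm : n%:R * (gamma - 1) <= m%:R :> R.
  have hmj : m%:R = 2 * j%:R :> R by rewrite /m -muln2 natrM mulrC.
  rewrite hn hmj.
  have ht : (2 - gamma)^-1 * (2 - gamma) = 1 by rewrite mulVf // subr_eq0 gt_eqF.
  have g20 : 0 < 2 - gamma by rewrite subr_gt0.
  nra.
set D : R := d%:R.
have D1 : 1 <= D by rewrite /D ler1n.
have D0 : 0 < D by apply: lt_le_trans D1.
set L := Lam * (n%:R * (n.-1)%:R).
have L0 : 0 < L.
  apply: mulr_gt0; first by apply: lt_le_trans hL.
  by apply: mulr_gt0; rewrite ltr0n.
set kappa := (4 / L) `^ (2 - gamma)^-1.
have kappa0 : 0 < kappa by apply: powR_gt0; apply: divr_gt0.
exists (kappa / (4 * D) ^+ n); split.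
  by apply: divr_gt0 => //; apply: exprn_gt0; apply: mulr_gt0.
move=> F R0 x0 u [hue _ hF0 _ _] hR0 [hcont hnn hsub _ [hcl _]] r /andP[r0 rR0].
rewrite real_leNgt ?num_real //; apply/negP => hsup.
set eps := r / (2 * D).
have eps0 : 0 < eps by apply: divr_gt0 => //; apply: mulr_gt0.
have epsD : D * eps = r / 2.
  by rewrite /eps; field; rewrite ?lt0r_neq0.
have [y [uy yb]] : exists y, 0 < u y /\ ball x0 eps y.
  have := hcl _ (nbhsx_ballx x0 eps eps0).
  by case=> y [/= uy yb]; exists y.
have hyc : forall i, `|y ord0 i - x0 ord0 i| < eps.
  move=> i; rewrite -ball_normE /= in yb.
  apply: le_lt_trans yb; rewrite [`|x0 - y|]distrC.
  by have := mx_norm_coord (y - x0) i; rewrite !mxE.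
set rho := 2 * r.
have rho0 : 0 < rho by apply: mulr_gt0.
set A := (rho ^+ 2 / L) `^ (2 - gamma)^-1.
have A0 : 0 < A by apply: powR_gt0; apply: divr_gt0 => //; apply: exprn_gt0.
have hAk : A = kappa * r `^ b by rewrite /A /rho A_eq.
set g := fun k : 'I_d => G A (y ord0 k) rho n.
set psi := sep g.
set Kb := [set w : 'rV[R]_d | enorm (w - x0) <= r].
have hKU : forall w, Kb w -> eball x0 R0 w.
  by move=> w Kw; rewrite /eball /=; apply: le_lt_trans Kw rR0.
have Kcl : closed Kb.
  have := @closed_comp _ _ (fun w : 'rV[R]_d => enorm (w - x0)) [set t | t <= r].
  apply => [w _|]; [exact: enorm_cont | exact: closed_le].
have Kbd : bounded_set Kb.
  have hb : forall w, Kb w -> `|w| <= r + `|x0|.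
    move=> w Kw; rewrite -[w](subrK x0); apply: le_trans (ler_normD _ _) _.
    by rewrite lerD2r; apply: le_trans (mx_norm_le_enorm _) Kw.
  apply: filterS (nbhs_pinfty_ge (num_real (r + `|x0|))) => M hM w Kw.
  exact: le_trans (hb w Kw) hM.
have Kco : compact Kb by apply: bounded_closed_compact.
have Kb0 : Kb !=set0 by exists x0; rewrite /Kb /= subrr enorm0 ltW.
have psic : continuous psi by apply: sep_continuous => k; exact: G_continuous.
have hucK : {within Kb, continuous u}.
  apply: continuous_in_subspaceT => w /set_mem Kw.
  by apply: hcont; apply: mem_set; apply: hKU.
have hfK : {within Kb, continuous (fun w => u w - psi w)}.
  apply: continuous_in_subspaceT => w /set_mem Kw.
  apply: continuousB; last exact: psic.
  by apply: hcont; apply: mem_set; apply: hKU.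
have [z /set_mem zK zmax] := EVT_max_rV Kb0 Kco hfK.
have [c /set_mem cK cmax] := EVT_max_rV Kb0 Kco hucK.
have hyK : Kb y.
  rewrite /Kb /=; apply: le_trans (enorm_le_coord (ltW eps0) _) _.
    by move=> i; rewrite !mxE; apply: ltW.
  rewrite -/D epsD; rewrite ler_pdivrMr //; rewrite ler_peMr ?ltW //.
  lra.
have psiy : psi y = 0.
  rewrite /psi /sep big1 // => k _.
  by rewrite /g /G subrr mul0r expr0n /= mulr0.
have hfz : 0 < u z - psi z.
  apply: lt_le_trans (zmax y (mem_set hyK)); by rewrite psiy subr0.
have i0 : 'I_d := Ordinal hd.
have gge0 : forall (w : 'rV[R]_d) k, 0 <= g k (w ord0 k).
  move=> w k; rewrite /g /G; apply: mulr_ge0; first exact: ltW.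
  by rewrite /n -doubleS exprn_even_ge0 // odd_double.
have psi_ge : forall (w : 'rV[R]_d) k, g k (w ord0 k) <= psi w.
  move=> w k; rewrite /psi /sep (bigD1 k) //= lerDl.
  by apply: sumr_ge0 => l _; exact: gge0.
have psi_sph : forall w, enorm (w - x0) = r -> kappa / (4 * D) ^+ n * r `^ b <= psi w.
  move=> w hw.
  have [i hi] := exists_max i0 (fun k => (w - x0) ord0 k ^+ 2).
  have hs : r ^+ 2 <= D * `|(w - x0) ord0 i| ^+ 2.
    rewrite -hw enorm_sq real_normK ?num_real //.
    apply: (@le_trans _ _ (\sum_(k < d) (w - x0) ord0 i ^+ 2)).
      by apply: ler_sum => k _; exact: hi.
    by rewrite sumr_const card_ord -mulr_natl.
  set a := `|(w - x0) ord0 i| in hs.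
  have a0 : 0 <= a by exact: normr_ge0.
  have hra : r <= D * a.
    have h2 : r ^+ 2 <= (D * a) ^+ 2.
      apply: le_trans hs _; rewrite exprMn ler_wpM2r ?sqr_ge0 //.
      by rewrite expr2; nra.
    have hDa : 0 <= D * a by apply: mulr_ge0 => //; apply: ltW.
    by rewrite -ler_sqr // nnegrE ltW.
  have hwy : r / 2 <= D * `|w ord0 i - y ord0 i|.
    have : a <= `|w ord0 i - y ord0 i| + `|y ord0 i - x0 ord0 i|.
      by rewrite /a !mxE; apply: le_trans (ler_normD _ _); rewrite subrKA.
    move: (hyc i) => hyi ha.
    nra.
  set t := (w ord0 i - y ord0 i) / rho.
  have ht : (4 * D)^-1 <= `|t|.
    have e1 : (4 * D)^-1 = r / 2 / D / rho.
      by rewrite /rho; field; rewrite ?lt0r_neq0.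
    rewrite e1 /t normrM [`|rho^-1|]gtr0_norm ?invr_gt0 // ler_pM2r ?invr_gt0 //.
    by rewrite ler_pdivrMr // [_ * D]mulrC.
  apply: le_trans (psi_ge w i); rewrite /g /G -/t.
  rewrite mulrAC -hAk; apply: ler_wpM2l; first exact: ltW.
  rewrite /n -doubleS [t ^+ _]even_abs -exprVn ler_pXn2r // nnegrE ?normr_ge0 //.
  by rewrite invr_ge0; apply: mulr_ge0 => //; apply: ltW.
have hzr : enorm (z - x0) < r.
  rewrite lt_def zK andbT; apply/negP => /eqP hz.
  have h1 : u z <= sup (u @` esphere x0 r).
    apply: ub_le_sup; last by exists z.
    exists (u c) => _ [s hs <-]; apply: cmax; apply: mem_set.
    by rewrite /Kb /= hs.
  have h2 := psi_sph z (esym hz).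
  have : u z - psi z < 0 by rewrite subr_lt0; apply: lt_le_trans h2; apply: le_lt_trans h1 hsup.
  by rewrite ltNge (ltW hfz).
have [e e0 he] : exists2 e : R, 0 < e & ball z e `<=` [set w | enorm (w - x0) < r].
  have hO : open [set w : 'rV[R]_d | enorm (w - x0) < r].
    have := @open_comp _ _ (fun w : 'rV[R]_d => enorm (w - x0)) [set t | t < r].
    apply => [w _|]; [exact: enorm_cont | exact: open_lt].
  have := hO z hzr; rewrite /interior => /nbhs_ballP [e e0 he].
  by exists e.
have heK : forall w, eball z e w -> Kb w.
  move=> w hw; apply: ltW; apply: he.
  rewrite -ball_normE /= distrC; apply: le_lt_trans hw.
  exact: mx_norm_le_enorm.
have zU : eball x0 R0 z by apply: hKU.
have hC2 : C2_on (eball z e) psi.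
  apply: sep_C2 => k t.
  - exact: G_derivable.
  - by rewrite /g G_derive1; exact: G_derivable.
  - by rewrite /g !G_derive1; exact: G_continuous.
have hF := hsub z psi e zU e0 hC2 (fun w hw _ => zmax w (mem_set (heK w hw))).
rewrite sep_hessian in hF.
set K1 := A * n%:R / rho * (n.-1)%:R / rho.
have K10 : 0 <= K1.
  apply: mulr_ge0; last by rewrite invr_ge0 ltW.
  apply: mulr_ge0; last by rewrite ler0n.
  apply: mulr_ge0; last by rewrite invr_ge0 ltW.
  by apply: mulr_ge0; [exact: ltW | rewrite ler0n].
set W := \row_k derive1 (derive1 (g k)) (z ord0 k).
have hW : forall k, W ord0 k = K1 * `|(z ord0 k - y ord0 k) / rho| ^+ m.
  move=> k; rewrite mxE /g !G_derive1 /G /= /m even_abs.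
  by rewrite /K1 !mulrA.
have [i hi] := exists_max i0 (fun k => `|(z ord0 k - y ord0 k) / rho|).
set q := `|(z ord0 i - y ord0 i) / rho|.
have q0 : 0 <= q by exact: normr_ge0.
have q1 : q <= 1.
  rewrite /q normrM [`|rho^-1|]gtr0_norm ?invr_gt0 // ler_pdivrMr // mul1r.
  have h1 : `|z ord0 i - y ord0 i| <= `|z ord0 i - x0 ord0 i| + `|y ord0 i - x0 ord0 i|.
    by rewrite [`|y ord0 i - _|]distrC; apply: le_trans (ler_normD _ _); rewrite subrKA.
  have h2 : `|z ord0 i - x0 ord0 i| <= r.
    by apply: ltW; apply: le_lt_trans hzr; have := coord_le_enorm (z - x0) i; rewrite !mxE.
  have h3 := hyc i.
  have h4 : eps <= r by rewrite /eps ler_pdivrMr ?mulr_gt0 //; nra.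
  rewrite /rho; lra.
have hWb : forall k, 0 <= W ord0 k <= K1 * q ^+ m.
  move=> k; rewrite hW; apply/andP; split.
    by apply: mulr_ge0 => //; apply: exprn_ge0.
  apply: ler_wpM2l => //; rewrite ler_pXn2r // ?nnegrE ?normr_ge0 //.
have hup : F (diag_mx W) <= Lam * (K1 * q ^+ m).
  have s0 : @Defs.symmetric R d 0 by rewrite /Defs.symmetric trmx0.
  have [_ ] := hue 0 (diag_mx W) s0 (psd_diag (fun k => proj1 (andP (hWb k)))).
  rewrite add0r hF0 subr0 => h; apply: le_trans h _.
  apply: ler_wpM2l; first by apply: le_trans hL.
  exact: opnorm_diag i0 hWb.
have hAq : A * q ^+ n <= psi z.
  apply: le_trans (psi_ge z i); rewrite /g /G /n -doubleS even_abs.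
  by rewrite -/q.
have hkey := key_pow (L:=L) (rho:=rho) (q:=q) hg L0 rho0 (introT andP (conj q0 q1)) m0 hm.
have hchain : Lam * (K1 * q ^+ m) < u z `^ (gamma - 1).
  apply: (@le_lt_trans _ _ ((A * q ^+ n) `^ (gamma - 1))).
    apply: le_trans hkey; rewrite -/A le_eqVlt; apply/orP; left; apply/eqP.
    exact: ring_aux.
  apply: (@le_lt_trans _ _ (psi z `^ (gamma - 1))).
    apply: ge0_ler_powR => //; first by rewrite subr_ge0 ltW.
      by rewrite nnegrE; apply: mulr_ge0; [exact: ltW | exact: exprn_ge0].
    by rewrite nnegrE; apply: le_trans hAq; apply: mulr_ge0; [exact: ltW | exact: exprn_ge0].
  apply: gt0_ltr_powR; first by rewrite subr_gt0.
  - by rewrite nnegrE; apply: le_trans hAq; apply: mulr_ge0; [exact: ltW | exact: exprn_ge0].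
  - by rewrite nnegrE; apply: hnn.
  - by rewrite -subr_gt0.
have := le_trans hF hup; rewrite leNgt hchain //.
Qed.
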